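(* Let $G=(V,E)$ be a finite connected graph with boundary $\partial G\subset V$, let $\alpha\in\Pi(\partial G)$, $p\in[0,1]$, $q>0$. Let $\widehat E\subset E$ be such that for every $e\in\widehat E$ there exists a cutset for $e$ contained in $E\setminus\widehat E$. Let $Q_{\widehat E}(e)$ be the collection of cutsets for $e$ contained in $E\setminus\widehat E$, and for $e\in\widehat E$ set \[\widehat\varepsilon_e:=|p'-p|\;\mathbb P^G_{\max(p,p')}\big(\exists\chi\in Q_{\widehat E}(e)\text{ such that all edges of }\chi\text{ are closed}\big).\] Then: (1) if $p<p'$, then $\mathbb P^G_{(p+\widehat\varepsilon_e\mathbf 1_{e\in\widehat E})_e}\preceq\phi^\alpha_{G,p,q}$; (2) if $p>p'$, then $\phi^\alpha_{G,p,q}\preceq\mathbb P^G_{(p-\widehat\varepsilon_e\mathbf 1_{e\in\widehat E})_e}$.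
   Context: Configurations are $\omega\in\{0,1\}^E$; an edge $e$ is open if $\omega(e)=1$, closed otherwise. $\Pi(\partial G)$ denotes the set of partitions of $\partial G$; vertices in the same block of $\alpha$ are called wired. $G\cup\alpha$ is the (multi)graph obtained from $G$ by identifying wired vertices. $k(\omega,\alpha)$ is the number of connected components of the graph with vertex set $V$ and edge set the open edges of $\omega$, after identifying wired vertices. The FK measure is $\phi^\alpha_{G,p,q}(\omega)=Z^{-1}\big(\prod_{e\in E}p^{\omega(e)}(1-p)^{1-\omega(e)}\big)q^{k(\omega,\alpha)}$. Set $p':=\frac{p}{p+q(1-p)}$. A cutset for an edge $e$ is a set $\chi\subset E\setminus\{e\}$ such that the endpoints of $e$ lie in different connected components of $G\cup\alpha$ with the edges of $\chi\cup\{e\}$ removed. $\mathbb P^G_{(p_e)}$ is the product measure on $\{0,1\}^E$ where edge $e$ is open independently with probability $p_e$ ($\mathbb P^G_s$ when $p_e\equiv s$). $\mu\preceq\mu'$ means $\mu(A)\le\mu'(A)$ for all increasing events $A$. *)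

(* Defs.v *)
From HB Require Import structures.
From mathcomp Require Import all_boot all_order all_algebra.
Set Implicit Arguments. Unset Strict Implicit. Unset Printing Implicit Defensive.
Import Order.TTheory GRing.Theory Num.Theory.
Local Open Scope ring_scope.

Section FK.
Variables (V E : finType) (ends : E -> V * V).

Definition config := {ffun E -> bool}.

Definition wired (alpha : {set {set V}}) (x y : V) : bool :=
  [exists B in alpha, (x \in B) && (y \in B)].

(* adjacency using only the edges of S, after identifying wired vertices *)
Definition adj (alpha : {set {set V}}) (S : {set E}) : rel V :=
  fun x y => [exists e in S, (ends e == (x, y)) || (ends e == (y, x))]
             || wired alpha x y.

Definition conn (alpha : {set {set V}}) (S : {set E}) (x y : V) : bool :=
  connect (adj alpha S) x y.

Definition graph_connected : Prop :=
  forall x y : V, connect (adj set0 [set: E]) x y.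

Definition open_edges (w : config) : {set E} := [set e | w e].

Definition kcomp (alpha : {set {set V}}) (w : config) : nat :=
  #|[set [set y | conn alpha (open_edges w) x y] | x : V]|.

Definition cutset (alpha : {set {set V}}) (e : E) (chi : {set E}) : bool :=
  (e \notin chi) && ~~ conn alpha (~: (e |: chi)) (ends e).1 (ends e).2.

Variable R : realFieldType.

Definition fk_weight (p q : R) (alpha : {set {set V}}) (w : config) : R :=
  (\prod_(e : E) (if w e then p else 1 - p)) * q ^+ kcomp alpha w.

Definition fk_Z (p q : R) (alpha : {set {set V}}) : R :=
  \sum_(w : config) fk_weight p q alpha w.

Definition fk_measure (p q : R) (alpha : {set {set V}}) (A : {set config}) : R :=
  (\sum_(w in A) fk_weight p q alpha w) / fk_Z p q alpha.

Definition prod_measure (pe : E -> R) (A : {set config}) : R :=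
  \sum_(w in A) \prod_(e : E) (if w e then pe e else 1 - pe e).

Definition increasing (A : {set config}) : Prop :=
  forall w w' : config, w \in A -> (forall e, w e ==> w' e) -> w' \in A.

Definition stoch_le (mu mu' : {set config} -> R) : Prop :=
  forall A, increasing A -> mu A <= mu' A.

Definition pprime (p q : R) : R := p / (p + q * (1 - p)).

Definition closed_cutset_event (alpha : {set {set V}}) (Ehat : {set E}) (e : E)
  : {set config} :=
  [set w : config | [exists chi : {set E},
      [&& cutset alpha e chi, chi \subset ~: Ehat & [forall f in chi, ~~ w f]]]].

Definition eps_hat (p q : R) (alpha : {set {set V}}) (Ehat : {set E}) (e : E) : R :=
  `|pprime p q - p| *
  prod_measure (fun _ => Num.max p (pprime p q)) (closed_cutset_event alpha Ehat e).

End FK.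

(* Main.v *)
Require Import Defs.
From HB Require Import structures.
From mathcomp Require Import all_boot all_order all_algebra.
From mathcomp Require Import ring lra.
Set Implicit Arguments. Unset Strict Implicit. Unset Printing Implicit Defensive.
Import Order.TTheory GRing.Theory Num.Theory.
Local Open Scope ring_scope.

Section Sums.
Variables (E : finType) (R : realFieldType).
Implicit Types (S : {set E}) (eta w : config E).

Definition agree S eta w : bool := [forall i, (i \notin S) ==> (w i == eta i)].
Definition tog (e : E) w : config E := [ffun i => if i == e then ~~ w i else w i].
Definition upd (e : E) (b : bool) w : config E := [ffun i => if i == e then b else w i].
Definition pif (r : E -> R) S w : R := \prod_(i in S) (if w i then r i else 1 - r i).

Lemma togK e : involutive (tog e).
Proof. by move=> w; apply/ffunP=> i; rewrite !ffunE; case: eqP => // _; rewrite negbK. Qed.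
Lemma tog_inj e : injective (tog e). Proof. exact: inv_inj (togK e). Qed.

Lemma agree_tog S eta e w : e \in S -> agree S eta (tog e w) = agree S eta w.
Proof.
move=> eS; apply: eq_forallb => i; rewrite ffunE; case: (i =P e) => // ->.
by rewrite eS.
Qed.

Lemma sum_pair S eta e (P : pred (config E)) (G : config E -> R) :
  e \in S -> (forall w, P (tog e w) = P w) ->
  \sum_(w | agree S eta w && P w) G w =
  \sum_(w | agree S eta w && P w && w e) (G w + G (tog e w)).
Proof.
move=> eS HP; rewrite (bigID (fun w => w e)) /= big_split /=; congr (_ + _).
rewrite (reindex_inj (@tog_inj e)) /=; apply: eq_bigl => w.
by rewrite agree_tog // HP ffunE eqxx negbK.
Qed.

Lemma agree_split S eta e w b : e \in S ->
  agree S eta w && (w e == b) = agree (S :\ e) (upd e b eta) w.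
Proof.
move=> eS; apply/idP/idP.
- case/andP=> /forallP H /eqP wb; apply/forallP=> i; rewrite !inE ffunE negb_and negbK.
  case: (i =P e) => [->|ne] /=; first by rewrite wb eqxx.
  exact: H.
- move/forallP=> H; apply/andP; split; last first.
    by have := H e; rewrite !inE eqxx /= ffunE eqxx.
  apply/forallP=> i; apply/implyP=> iS; have := H i.
  rewrite !inE (negbTE iS) andbF ffunE /=.
  by case: (i =P e) => [ie|//]; move: iS; rewrite ie eS.
Qed.

Lemma sum_pair1 S eta e (G : config E -> R) :
  e \in S ->
  \sum_(w | agree S eta w) G w =
  \sum_(w | agree S eta w && w e) (G w + G (tog e w)).
Proof.
move=> eS; rewrite (bigID (fun w => w e)) /= big_split /=; congr (_ + _).
rewrite (reindex_inj (@tog_inj e)) /=; apply: eq_bigl => w.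
by rewrite agree_tog // ffunE eqxx negbK.
Qed.

Lemma agreeT eta w : agree [set: E] eta w.
Proof. by apply/forallP => i; rewrite inE. Qed.

Lemma sum_compl S eta (A : {set config E}) (G : config E -> R) :
  \sum_(w | agree S eta w && (w \in ~: A)) G w =
  \sum_(w | agree S eta w) G w - \sum_(w | agree S eta w && (w \in A)) G w.
Proof.
rewrite [X in _ = X - _](bigID (fun w => w \in A)) /= addrAC subrr add0r.
by apply: eq_bigl => w; rewrite inE.
Qed.

Lemma sum_sub S eta (P : pred (config E)) (G : config E -> R) :
  (forall w, 0 <= G w) ->
  \sum_(w | agree S eta w && P w) G w <= \sum_(w | agree S eta w) G w.
Proof.
move=> hG; rewrite big_mkcondr /=; apply: ler_sum => w _; case: ifP => // _.
Qed.

Lemma sum_mono S eta (P Q : pred (config E)) (G : config E -> R) :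
  (forall w, 0 <= G w) -> (forall w, P w -> Q w) ->
  \sum_(w | agree S eta w && P w) G w <= \sum_(w | agree S eta w && Q w) G w.
Proof.
move=> hG PQ; rewrite big_mkcondr [X in _ <= X]big_mkcondr /=; apply: ler_sum => w _.
by case: ifP => [/PQ ->|_] //; case: ifP.
Qed.

Lemma sum_split S eta e (P : pred (config E)) (G : config E -> R) :
  e \in S ->
  \sum_(w | agree S eta w && P w) G w =
  \sum_(w | agree (S :\ e) (upd e true eta) w && P w) G w +
  \sum_(w | agree (S :\ e) (upd e false eta) w && P w) G w.
Proof.
move=> eS; rewrite (bigID (fun w => w e)) /=; congr (_ + _); apply: eq_bigl => w.
  by rewrite -agree_split // eqb_id -!andbA; congr (_ && _); rewrite andbC.
by rewrite -agree_split // eqbF_neg -!andbA; congr (_ && _); rewrite andbC.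
Qed.

Lemma agree_tog2 S eta e w b : e \notin S ->
  agree S (upd e b eta) (tog e w) = agree S (upd e (~~ b) eta) w.
Proof.
move=> eS; apply: eq_forallb => i; rewrite !ffunE; case: (i =P e) => // ->.
by rewrite eS /=; case: (w e); case: b.
Qed.

Lemma sum_transport S eta e (P : pred (config E)) (G : config E -> R) b :
  e \notin S ->
  \sum_(w | agree S (upd e b eta) w && P w) G w =
  \sum_(w | agree S (upd e (~~ b) eta) w && P (tog e w)) G (tog e w).
Proof.
by move=> eS; rewrite (reindex_inj (@tog_inj e)) /=; apply: eq_bigl => w; rewrite agree_tog2.
Qed.

Lemma pif_split r S e w : e \in S ->
  pif r S w = (if w e then r e else 1 - r e) * pif r (S :\ e) w.
Proof.
move=> eS; rewrite /pif (bigD1 e) //=; congr (_ * _); apply: eq_bigl => i.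
by rewrite !inE andbC.
Qed.

Lemma pif_tog r S e w : e \notin S -> pif r S (tog e w) = pif r S w.
Proof.
move=> eS; apply: eq_bigr => i iS; rewrite ffunE; case: eqP => // ie.
by move: iS; rewrite ie (negbTE eS).
Qed.

Lemma pif_ge0 r S w : (forall i, 0 <= r i <= 1) -> 0 <= pif r S w.
Proof.
move=> hr; apply: prodr_ge0 => i _; case: (w i); have /andP[] := hr i => //.
by move=> *; rewrite subr_ge0.
Qed.



Lemma agree0 eta w : agree set0 eta w = (w == eta).
Proof.
apply/forallP/eqP => [H|->]; last by move=> i; rewrite eqxx implybT.
by apply/ffunP=> i; move: (H i); rewrite inE /= => /eqP.
Qed.

Lemma sum_agree0 eta (P : pred (config E)) (G : config E -> R) :
  \sum_(w | agree set0 eta w && P w) G w = if P eta then G eta else 0.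
Proof.
case: ifP => Pe.
  by rewrite (big_pred1 eta) // => w /=; rewrite agree0; case: eqP => // ->.
by rewrite big_pred0 // => w; rewrite agree0; case: eqP => // ->.
Qed.


Lemma sum_agree0' eta (G : config E -> R) :
  \sum_(w | agree set0 eta w) G w = G eta.
Proof. by rewrite (big_pred1 eta) // => w /=; rewrite agree0. Qed.

Lemma sum_split1 S eta e (G : config E -> R) :
  e \in S ->
  \sum_(w | agree S eta w) G w =
  \sum_(w | agree (S :\ e) (upd e true eta) w) G w +
  \sum_(w | agree (S :\ e) (upd e false eta) w) G w.
Proof.
move=> eS; rewrite (bigID (fun w => w e)) /=; congr (_ + _); apply: eq_bigl => w.
  by rewrite -agree_split // eqb_id.
by rewrite -agree_split // eqbF_neg.
Qed.

Lemma agree_val S eta w i : agree S eta w -> i \notin S -> w i = eta i.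
Proof. by move/forallP/(_ i)/implyP => H /H /eqP. Qed.

Lemma upd_eq e b eta : upd e b eta e = b.
Proof. by rewrite ffunE eqxx. Qed.

Lemma notin_D1 S e : e \notin S :\ e.
Proof. by rewrite !inE eqxx. Qed.

Lemma sum_we S eta e (G : config E -> R) : e \in S ->
  \sum_(w | agree S eta w && w e) G w = \sum_(w | agree (S :\ e) (upd e true eta) w) G w.
Proof. by move=> eS; apply: eq_bigl => w; rewrite -agree_split // eqb_id. Qed.

Lemma tog_le_inc e w (A : {set config E}) : increasing A -> w e ->
  tog e w \in A -> w \in A.
Proof.
move=> incA we hA; apply: (incA _ _ hA) => i; rewrite ffunE.
by case: (i =P e) => [->|_]; rewrite ?we ?implybT ?implybb.
Qed.

Lemma P0leP1 (r : E -> R) S eta e (A : {set config E}) :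
  (forall i, 0 <= r i <= 1) -> increasing A -> e \notin S ->
  \sum_(w | agree S (upd e false eta) w && (w \in A)) pif r S w <=
  \sum_(w | agree S (upd e true eta) w && (w \in A)) pif r S w.
Proof.
move=> hr incA eS; rewrite (sum_transport _ _ _ _ eS) /=.
rewrite big_mkcondr [X in _ <= X]big_mkcondr /=; apply: ler_sum => w ag.
have we : w e by rewrite (agree_val ag eS) upd_eq.
rewrite pif_tog //; case: ifP => hA; first by rewrite (tog_le_inc incA we hA).
by case: ifP => _ //; apply: pif_ge0.
Qed.

Lemma dom_lower (r : E -> R) (nu : config E -> R) (good : pred {set E}) :
  (forall i, 0 <= r i <= 1) -> (forall w, 0 <= nu w) ->
  (forall S eta, good S -> S != set0 -> exists2 e, e \in S &
     good (S :\ e) && (r e * \sum_(w | agree S eta w) nu w <= \sum_(w | agree S eta w && w e) nu w)) ->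
  forall S eta (A : {set config E}), good S -> increasing A ->
  (\sum_(w | agree S eta w && (w \in A)) pif r S w) * \sum_(w | agree S eta w) nu w
    <= \sum_(w | agree S eta w && (w \in A)) nu w.
Proof.
move=> hr hnu H S; move: {2}#|S| (erefl #|S|) => n.
elim: n S => [|n IH] S cS eta A gS incA.
  rewrite (cards0_eq cS) !sum_agree0 sum_agree0'.
  by case: ifP => _; rewrite ?mul0r // /pif big_set0 mul1r.
have S0 : S != set0 by apply/eqP => S0; move: cS; rewrite S0 cards0.
have [e eS /andP[gS' hN]] := H S eta gS S0.
have cS' : #|S :\ e| = n by move: cS; rewrite (cardsD1 e) eS add1n => -[].
rewrite (sum_we _ _ eS) in hN.
rewrite (sum_split1 _ _ eS) in hN *.
rewrite !(sum_split _ _ _ eS).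
have e' := notin_D1 S e.
have E1 : \sum_(w | agree (S :\ e) (upd e true eta) w && (w \in A)) pif r S w =
   r e * \sum_(w | agree (S :\ e) (upd e true eta) w && (w \in A)) pif r (S :\ e) w.
  rewrite mulr_sumr; apply: eq_bigr => w /andP[ag _].
  by rewrite (pif_split _ _ eS) (agree_val ag e') upd_eq.
have E0 : \sum_(w | agree (S :\ e) (upd e false eta) w && (w \in A)) pif r S w =
   (1 - r e) * \sum_(w | agree (S :\ e) (upd e false eta) w && (w \in A)) pif r (S :\ e) w.
  rewrite mulr_sumr; apply: eq_bigr => w /andP[ag _].
  by rewrite (pif_split _ _ eS) (agree_val ag e') upd_eq.
rewrite E1 E0.
have I1 := IH _ cS' (upd e true eta) A gS' incA.
have I0 := IH _ cS' (upd e false eta) A gS' incA.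
have PP := P0leP1 eta hr incA e'.
move: I1 I0 PP hN.
set P1 := \sum_(w | _ && _) pif r _ _.
set P0 := \sum_(w | _ && _) pif r _ _.
set N1 := \sum_(w | agree _ (upd e true eta) _) nu _.
set N0 := \sum_(w | agree _ (upd e false eta) _) nu _.
set M1 := \sum_(w | _ && _) nu _.
set M0 := \sum_(w | _ && _) nu _.
move=> I1 I0 PP hN.
have h : 0 <= (P1 - P0) * (N1 - r e * (N1 + N0)) by apply: mulr_ge0; rewrite subr_ge0.
nra.
Qed.

Lemma dom_upper (r : E -> R) (nu : config E -> R) (good : pred {set E}) :
  (forall i, 0 <= r i <= 1) -> (forall w, 0 <= nu w) ->
  (forall S eta, good S -> S != set0 -> exists2 e, e \in S &
     good (S :\ e) && (\sum_(w | agree S eta w && w e) nu w <= r e * \sum_(w | agree S eta w) nu w)) ->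
  forall S eta (A : {set config E}), good S -> increasing A ->
  \sum_(w | agree S eta w && (w \in A)) nu w <=
  (\sum_(w | agree S eta w && (w \in A)) pif r S w) * \sum_(w | agree S eta w) nu w.
Proof.
move=> hr hnu H S; move: {2}#|S| (erefl #|S|) => n.
elim: n S => [|n IH] S cS eta A gS incA.
  rewrite (cards0_eq cS) !sum_agree0 sum_agree0'.
  by case: ifP => _; rewrite ?mul0r // /pif big_set0 mul1r.
have S0 : S != set0 by apply/eqP => S0; move: cS; rewrite S0 cards0.
have [e eS /andP[gS' hN]] := H S eta gS S0.
have cS' : #|S :\ e| = n by move: cS; rewrite (cardsD1 e) eS add1n => -[].
rewrite (sum_we _ _ eS) in hN.
rewrite (sum_split1 _ _ eS) in hN *.
rewrite !(sum_split _ _ _ eS).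
have e' := notin_D1 S e.
have E1 : \sum_(w | agree (S :\ e) (upd e true eta) w && (w \in A)) pif r S w =
   r e * \sum_(w | agree (S :\ e) (upd e true eta) w && (w \in A)) pif r (S :\ e) w.
  rewrite mulr_sumr; apply: eq_bigr => w /andP[ag _].
  by rewrite (pif_split _ _ eS) (agree_val ag e') upd_eq.
have E0 : \sum_(w | agree (S :\ e) (upd e false eta) w && (w \in A)) pif r S w =
   (1 - r e) * \sum_(w | agree (S :\ e) (upd e false eta) w && (w \in A)) pif r (S :\ e) w.
  rewrite mulr_sumr; apply: eq_bigr => w /andP[ag _].
  by rewrite (pif_split _ _ eS) (agree_val ag e') upd_eq.
rewrite E1 E0.
have I1 := IH _ cS' (upd e true eta) A gS' incA.
have I0 := IH _ cS' (upd e false eta) A gS' incA.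
have PP := P0leP1 eta hr incA e'.
move: I1 I0 PP hN.
set P1 := \sum_(w | _ && _) pif r _ _.
set P0 := \sum_(w | _ && _) pif r _ _.
set N1 := \sum_(w | agree _ (upd e true eta) _) nu _.
set N0 := \sum_(w | agree _ (upd e false eta) _) nu _.
set M1 := \sum_(w | _ && _) nu _.
set M0 := \sum_(w | _ && _) nu _.
move=> I1 I0 PP hN.
have h : 0 <= (P1 - P0) * (r e * (N1 + N0) - N1) by apply: mulr_ge0; rewrite subr_ge0.
nra.
Qed.


Lemma sum_transport1 S eta e (G : config E -> R) b :
  e \notin S ->
  \sum_(w | agree S (upd e b eta) w) G w =
  \sum_(w | agree S (upd e (~~ b) eta) w) G (tog e w).
Proof.
by move=> eS; rewrite (reindex_inj (@tog_inj e)) /=; apply: eq_bigl => w; rewrite agree_tog2.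
Qed.

Lemma upd_id e eta : upd e (eta e) eta = eta.
Proof. by apply/ffunP => i; rewrite ffunE; case: (i =P e) => [->|]. Qed.

Lemma marginal (r : E -> R) (T : {set E}) (F : config E -> R) :
  (forall w w', (forall i, i \in T -> w i = w' i) -> F w = F w') ->
  forall S eta, T \subset S ->
  \sum_(w | agree S eta w) pif r S w * F w = \sum_w pif r [set: E] w * F w.
Proof.
move=> HF S; move: {2}#|~: S| (erefl #|~: S|) => n.
elim: n S => [|n IH] S cS eta TS.
  have ST : S = [set: E] by rewrite -[S]setCK (cards0_eq cS) setC0.
  rewrite ST; apply: eq_bigl => w; apply/forallP => i; by rewrite inE.
have : ~: S != set0 by rewrite -card_gt0 cS.
case/set0Pn => e; rewrite inE => eS.
have cS' : #|~: (e |: S)| = n.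
  move: cS; rewrite (cardsD1 e) inE eS add1n => -[<-]; apply: eq_card => i.
  by rewrite !inE negb_or andbC.
have eS' : e \in e |: S by rewrite !inE eqxx.
have TS' : T \subset e |: S by apply: subset_trans TS (subsetUr _ _).
rewrite -(IH _ cS' eta TS') (sum_split1 _ _ eS') setU1K //.
have X0 : forall b, \sum_(w | agree S (upd e b eta) w) pif r (e |: S) w * F w =
    (if b then r e else 1 - r e) * \sum_(w | agree S (upd e b eta) w) pif r S w * F w.
  move=> b; rewrite mulr_sumr; apply: eq_bigr => w ag.
  by rewrite (pif_split _ _ eS') setU1K // (agree_val ag eS) upd_eq mulrA.
rewrite !X0.
have XX : \sum_(w | agree S (upd e false eta) w) pif r S w * F w =
          \sum_(w | agree S (upd e true eta) w) pif r S w * F w.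
  rewrite (sum_transport1 _ _ _ eS) /=; apply: eq_bigr => w _.
  rewrite pif_tog //; congr (_ * _); apply: HF => i iT; rewrite ffunE.
  case: (i =P e) => // ie; move: eS; rewrite -ie; move/subsetP: TS => /(_ i iT) ->.
  by [].
rewrite XX -mulrDl addrC subrK mul1r -[in LHS](upd_id e eta).
by case: (eta e) => //; rewrite -XX.
Qed.
Lemma pif_total (r : E -> R) S eta : \sum_(w | agree S eta w) pif r S w = 1.
Proof.
have h : forall S' eta', \sum_(w | agree S' eta' w) pif r S' w * 1 = \sum_w pif r [set: E] w * 1.
  by move=> S' eta'; apply: (@marginal r (set0 : {set E})) => //; apply: sub0set.
rewrite (eq_bigr (fun w => pif r S w * 1)); last by move=> w _; rewrite mulr1.
rewrite (h S eta) -(h set0 eta) sum_agree0' /pif big_set0 mul1r.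
done.
Qed.

Lemma pif_C (r : E -> R) (T : {set E}) S eta (C : {set config E}) :
  (forall w w', (forall i, i \in T -> w i = w' i) -> (w \in C) = (w' \in C)) ->
  T \subset S ->
  \sum_(w | agree S eta w && (w \in C)) pif r S w = prod_measure r C.
Proof.
move=> hC TS; rewrite big_mkcondr /=.
transitivity (\sum_(w | agree S eta w) pif r S w * (w \in C)%:R).
  by apply: eq_bigr => w _; case: ifP; rewrite ?mulr1 ?mulr0.
rewrite (@marginal r T) //; last by move=> w w' h; rewrite (hC w w' h).
rewrite /prod_measure [RHS]big_mkcond /=; apply: eq_bigr => w _.
case: ifP; rewrite ?mulr1 ?mulr0 // => _; apply: eq_bigl => i; by rewrite inE.
Qed.

Lemma pif_setT (r : E -> R) eta (A : {set config E}) :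
  \sum_(w | agree [set: E] eta w && (w \in A)) pif r [set: E] w = prod_measure r A.
Proof.
apply: eq_big => w; first by rewrite agreeT.
by move=> _; apply: eq_bigl => i; rewrite inE.
Qed.

End Sums.
Section Graph.
Variables (V E : finType) (ends : E -> V * V) (alpha : {set {set V}}).
Implicit Types (S : {set E}).
Local Notation cn S := (conn ends alpha S).
Local Notation ad S := (adj ends alpha S).

Lemma adj_sym S : symmetric (ad S).
Proof.
move=> x y; rewrite /adj /wired /=; congr (_ || _).
  by apply: eq_existsb => f; rewrite [(_ == (x, y)) || _]orbC.
by apply: eq_existsb => B; rewrite [(x \in B) && _]andbC.
Qed.

Lemma cn_sym S : connect_sym (ad S).
Proof. exact: sym_connect_sym (adj_sym S). Qed.

Lemma cn_symE S x y : cn S x y = cn S y x.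
Proof. exact: cn_sym. Qed.

Lemma cn_trans S x y z : cn S x y -> cn S y z -> cn S x z.
Proof. exact: connect_trans. Qed.

Lemma cn_refl S x : cn S x x.
Proof. exact: connect0. Qed.

Lemma cn_same S x y : cn S x y -> forall z, cn S x z = cn S y z.
Proof. move=> h z; rewrite /conn; exact: (same_connect (cn_sym S) h). Qed.

Lemma adj_sub S S' : S \subset S' -> subrel (ad S) (ad S').
Proof.
move=> sS x y /orP[/existsP[f /andP[fS h]]|w]; apply/orP; last by right.
by left; apply/existsP; exists f; rewrite (subsetP sS _ fS) h.
Qed.

Lemma cn_sub S S' x y : S \subset S' -> cn S x y -> cn S' x y.
Proof.
move=> sS; apply: connect_sub => u v h; apply: connect1; exact: adj_sub h.
Qed.

Lemma cn_edge S f : f \in S -> cn S (ends f).1 (ends f).2.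
Proof.
move=> fS; apply: connect1; apply/orP; left; apply/existsP; exists f.
by rewrite fS -surjective_pairing eqxx.
Qed.

Section Edge.
Variables (S : {set E}) (e : E).
Let a := (ends e).1.
Let b := (ends e).2.
Definition rhs x y := [|| cn S x y, cn S x a && cn S b y | cn S x b && cn S a y].

Lemma rhs_ab x z : (cn S x a || cn S x b) -> z = a \/ z = b -> rhs x z.
Proof.
rewrite /rhs => /orP[h|h] [->|->]; rewrite ?h ?cn_refl ?orbT //.
Qed.

Lemma L1_path x : forall p u, path (ad (e |: S)) u p -> rhs x u -> rhs x (last u p).
Proof.
elim => [|z p IHp] u //= /andP[huz pth] hx; apply: IHp pth _.
  case/orP: huz => [/existsP[f /andP[fS' hf]]|hw].
    move: fS'; rewrite !inE => /orP[/eqP fe|fS].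
      subst f; apply: rhs_ab.
        move: hx; rewrite /rhs => /or3P[h|/andP[h _]|/andP[h _]]; rewrite ?h ?orbT //.
        have: (ends e == (u, z)) || (ends e == (z, u)) := hf.
        rewrite -/a -/b.
        by case/orP=> /eqP he; move: h; rewrite /a /b he /= => ->; rewrite ?orbT.
      case/orP: hf => /eqP he; rewrite /a /b he /=; by [right|left].
    have huz : cn S u z.
      by apply: connect1; apply/orP; left; apply/existsP; exists f; rewrite fS hf.
    move: hx; rewrite /rhs => /or3P[h|/andP[h1 h2]|/andP[h1 h2]].
    - by rewrite (cn_trans h huz).
    - by rewrite h1 (cn_trans h2 huz) orbT.
    - by rewrite h1 (cn_trans h2 huz) !orbT.
  have huz : cn S u z by apply: connect1; apply/orP; right.
  move: hx; rewrite /rhs => /or3P[h|/andP[h1 h2]|/andP[h1 h2]].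
  - by rewrite (cn_trans h huz).
  - by rewrite h1 (cn_trans h2 huz) orbT.
  - by rewrite h1 (cn_trans h2 huz) !orbT.
Qed.

Lemma L1 x y : cn (e |: S) x y = rhs x y.
Proof.
apply/idP/idP.
  case/connectP => p pth ->; apply: L1_path pth _; by rewrite /rhs cn_refl.
have sS : S \subset e |: S by apply: subsetUr.
have eab : cn (e |: S) a b by apply: cn_edge; rewrite !inE eqxx.
case/or3P=> [h|/andP[h1 h2]|/andP[h1 h2]].
- exact: cn_sub h.
- apply: cn_trans (cn_sub sS h1) _; apply: cn_trans eab (cn_sub sS h2).
- apply: cn_trans (cn_sub sS h1) _; rewrite cn_symE in eab.
  apply: cn_trans eab (cn_sub sS h2).
Qed.


Definition kc S' := #|[set [set y | cn S' x y] | x : V]|.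

Lemma cl_eq S' x y : cn S' x y -> [set z | cn S' x z] = [set z | cn S' y z].
Proof. by move=> h; apply/setP => z; rewrite !inE /conn (same_connect (cn_sym S') h). Qed.

Lemma kc_add : (kc (e |: S) + ~~ cn S a b)%N = kc S.
Proof.
have sS : S \subset e |: S by apply: subsetUr.
case hab: (cn S a b) => /=.
  rewrite addn0 /kc; suff -> : [set [set y | cn (e |: S) x y] | x : V] = [set [set y | cn S x y] | x : V] by [].
  apply: eq_imset => x; apply/setP => y.
  rewrite !inE L1 /rhs; apply/idP/idP; last by move=> ->.
  case/or3P => [//|/andP[h1 h2]|/andP[h1 h2]].
    exact: cn_trans (cn_trans h1 hab) h2.
  by rewrite cn_symE in hab; exact: cn_trans (cn_trans h1 hab) h2.
pose cl x := [set z | cn S x z].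
pose g (c : {set V}) := if (a \in c) || (b \in c) then cl a :|: cl b else c.
have hc1 : forall x, [set y | cn (e |: S) x y] = g (cl x).
  move=> x; rewrite /g /cl !inE; apply/setP => y; rewrite !inE L1 /rhs.
  case hxa: (cn S x a); case hxb: (cn S x b) => /=.
  - by move: hab; rewrite (cn_trans (_ : cn S a x) hxb) // cn_symE.
  - by rewrite !inE (cn_same hxa) orbF.
  - by rewrite !inE (cn_same hxb) orbC.
  - by rewrite !inE orbF.
rewrite /kc.
have -> : [set [set y | cn (e |: S) x y] | x : V] = g @: [set cl x | x : V].
  by rewrite -imset_comp; apply: eq_imset.
set K0 := [set cl x | x : V].
have caK : cl a \in K0 by apply: imset_f.
have cbK : cl b \in K0 by apply: imset_f.
have aa : a \in cl a by rewrite inE cn_refl.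
have bb : b \in cl b by rewrite inE cn_refl.
have gab : g (cl b) = g (cl a) by rewrite /g aa bb !orbT.
have ab' : a \notin cl b by rewrite inE cn_symE hab.
have cab : cl a != cl b by apply/eqP => h; move: ab'; rewrite -h aa.
have -> : g @: K0 = g @: (K0 :\ cl b).
  apply/eqP; rewrite eqEsubset [X in _ && X]imsetS ?subsetDl // andbT.
  apply/subsetP => c /imsetP[d dK ->]; case: (d =P cl b) => [->|ne].
    by rewrite gab; apply: imset_f; rewrite !inE cab caK.
  by apply: imset_f; rewrite in_setD1 dK andbT; apply/eqP.
have gx : forall x, cl x != cl b -> g (cl x) = if cn S x a then cl a :|: cl b else cl x.
  move=> x nx; rewrite /g !inE.
  case hxb: (cn S x b); first by case/eqP: nx; apply: cl_eq.
  by rewrite orbF.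
suff -> : #|g @: (K0 :\ cl b)| = #|K0 :\ cl b|.
  by rewrite [in RHS](cardsD1 (cl b)) cbK add1n addn1.
apply: card_in_imset.
move=> c d /setD1P[nc /imsetP[x _ cx]] /setD1P[nd /imsetP[y _ dy]]; subst c d.
rewrite (gx x nc) (gx y nd).
have clxa : cn S x a -> cl x = cl a by move=> h; apply: cl_eq.
have clya : cn S y a -> cl y = cl a by move=> h; apply: cl_eq.
case hxa: (cn S x a); case hya: (cn S y a) => //.
- by move=> _; rewrite clxa // clya.
- move=> h; have : a \in cl y by rewrite -h inE aa.
  by rewrite inE hya.
- move=> h; have : a \in cl x by rewrite h inE aa.
  by rewrite inE hxa.
Qed.

End Edge.
End Graph.

Lemma alg_d1 (R : realFieldType) (p q X Q : R) : p + q * (1 - p) != 0 ->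
  p * X * Q - p * (p * X * Q + (1 - p) * X * (Q * q)) =
  (p / (p + q * (1 - p)) - p) * (p * X * Q + (1 - p) * X * (Q * q)).
Proof. by move=> Dn; field. Qed.

Lemma alg_d0 (R : realFieldType) (p q X Q : R) :
  p * X * Q - p * (p * X * Q + (1 - p) * X * (Q * 1)) = (p / (p + q * (1 - p)) - p) * 0.
Proof. by rewrite mulr0 mulr1; ring. Qed.

Section FKsec.
Variables (R : realFieldType) (V E : finType) (ends : E -> V * V) (alpha : {set {set V}}) (p q : R).
Hypotheses (p0 : 0 < p) (p1 : p < 1) (q0 : 0 < q).
Implicit Types (e : E) (w : config E) (S : {set E}).
Local Notation nu := (fk_weight ends p q alpha).
Local Notation pp := (pprime p q).

Definition dd (e : E) (w : config E) : bool :=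
  ~~ conn ends alpha (open_edges w :\ e) (ends e).1 (ends e).2.

Lemma open_tog e w : w e -> open_edges (tog e w) = open_edges w :\ e.
Proof.
move=> we; apply/setP => i; rewrite !inE ffunE; case: (i =P e) => [->|_] //=.
by rewrite we.
Qed.

Lemma dd_tog e w : dd e (tog e w) = dd e w.
Proof.
rewrite /dd; congr (~~ conn _ _ _ _ _); apply/setP => i; rewrite !inE ffunE.
by case: (i =P e).
Qed.

Lemma kcomp_tog e w : w e -> kcomp ends alpha (tog e w) = (kcomp ends alpha w + dd e w)%N.
Proof.
move=> we; have := kc_add ends alpha (open_edges w :\ e) e.
rewrite setD1K ?inE // => h.
by rewrite /kcomp open_tog //; apply: esym; exact: h.
Qed.

Lemma nu_split e w : nu w = (if w e then p else 1 - p) *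
   (\prod_(i | i != e) (if w i then p else 1 - p)) * q ^+ kcomp ends alpha w.
Proof. by rewrite /fk_weight (bigD1 e) //= mulrA. Qed.

Lemma nu_ge0 w : 0 <= nu w.
Proof.
apply: mulr_ge0; last by apply: exprn_ge0; apply: ltW.
apply: prodr_ge0 => i _; case: (w i); [apply: ltW | rewrite subr_ge0; apply: ltW] => //.
Qed.

Lemma nu_gt0 w : 0 < nu w.
Proof.
apply: mulr_gt0; last by apply: exprn_gt0.
apply: prodr_gt0 => i _; case: (w i); rewrite ?subr_gt0 //.
Qed.

Lemma pair_id e w : w e ->
  nu w - p * (nu w + nu (tog e w)) = (pp - p) * (if dd e w then nu w + nu (tog e w) else 0).
Proof.
move=> we.
have hP : \prod_(i | i != e) (if tog e w i then p else 1 - p) =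
          \prod_(i | i != e) (if w i then p else 1 - p).
  by apply: eq_bigr => i /negbTE ie; rewrite ffunE ie.
rewrite (nu_split e (tog e w)) (nu_split e w) hP kcomp_tog // ffunE eqxx we /=.
set X := \prod_(i | i != e) _.
set k := kcomp _ _ _.
have Dn : p + q * (1 - p) != 0.
  by rewrite gt_eqF // ltr_wpDr // mulr_ge0 ?subr_ge0 ?ltW.
rewrite exprD /pprime; case: (dd e w) => /=.
  by rewrite expr1; apply: alg_d1.
by rewrite expr0; apply: alg_d0.
Qed.


Lemma F1 S eta e : e \in S ->
  \sum_(w | agree S eta w && w e) nu w - p * \sum_(w | agree S eta w) nu w =
  (pp - p) * \sum_(w | agree S eta w && dd e w) nu w.
Proof.
move=> eS.
rewrite (@sum_pair1 E R S eta e nu eS) (@sum_pair E R S eta e (dd e) nu eS (dd_tog e)) !mulr_sumr -sumrB.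
transitivity (\sum_(w | agree S eta w && w e)
   (pp - p) * (if dd e w then nu w + nu (tog e w) else 0)).
  by apply: eq_bigr => w /andP[_ we]; exact: pair_id.
rewrite [RHS](eq_bigl (fun w => (agree S eta w && w e) && dd e w)); last first.
  by move=> w; rewrite -!andbA [dd e w && _]andbC.
rewrite [RHS]big_mkcondr [RHS]big_mkcondr [LHS]big_mkcondr /=; apply: eq_bigr => w _.
case: ifP => // _; case: ifP => _; by rewrite ?mulr0.
Qed.

Lemma Dsum_ge0 S eta e : 0 <= \sum_(w | agree S eta w && dd e w) nu w.
Proof. by apply: sumr_ge0 => w _; apply: nu_ge0. Qed.

Lemma Dsum_le S eta e :
  \sum_(w | agree S eta w && dd e w) nu w <= \sum_(w | agree S eta w) nu w.
Proof. by apply: sum_sub => w; apply: nu_ge0. Qed.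

Lemma C_dd Ehat e w : w \in closed_cutset_event ends alpha Ehat e -> dd e w.
Proof.
rewrite inE => /existsP[chi /and3P[/andP[eC hc] _ /forallP cl]].
apply: contra hc => h; apply: cn_sub h; apply/subsetP => f.
rewrite !inE negb_or => /andP[fe wf]; rewrite fe /=.
by apply: contraL wf => fc; have := cl f; rewrite fc.
Qed.

Lemma C_dep Ehat e w w' : (forall i, i \in ~: Ehat -> w i = w' i) ->
  (w \in closed_cutset_event ends alpha Ehat e) = (w' \in closed_cutset_event ends alpha Ehat e).
Proof.
move=> h; rewrite !inE; apply: eq_existsb => chi.
case sub: (chi \subset ~: Ehat); rewrite ?andbF ?andbT //=; congr (_ && _).
apply: eq_forallb => f; case fc: (f \in chi) => //=.
by rewrite h // (subsetP sub).
Qed.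

Lemma C_dec Ehat e : increasing (~: closed_cutset_event ends alpha Ehat e).
Proof.
move=> w w'; rewrite !inE => hw hle; apply: contra hw => /existsP[chi /and3P[h1 h2 /forallP h3]].
apply/existsP; exists chi; rewrite h1 h2 /=; apply/forallP => f.
by apply/implyP => fc; have := h3 f; rewrite fc /=; apply: contra; apply/implyP.
Qed.

End FKsec.

Section Main.
Variables (R : realFieldType) (V E : finType) (ends : E -> V * V) (alpha : {set {set V}}) (p q : R).
Hypotheses (p0 : 0 < p) (p1 : p < 1) (q0 : 0 < q).
Implicit Types (e : E) (w : config E) (S : {set E}).
Local Notation nu := (fk_weight ends p q alpha).
Local Notation pp := (pprime p q).
Local Notation m := (Num.max p pp).

Lemma pp_ge0 : 0 <= pp.
Proof.
apply: divr_ge0; first exact: ltW.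
apply: addr_ge0; first exact: ltW.
by apply: mulr_ge0; [exact: ltW | rewrite subr_ge0; exact: ltW].
Qed.

Lemma pp_le1 : pp <= 1.
Proof.
have h1p : 0 <= 1 - p by rewrite subr_ge0; exact: ltW.
have hq : 0 <= q * (1 - p) by apply: mulr_ge0 => //; exact: ltW.
have D0 : 0 < p + q * (1 - p) by apply: ltr_wpDr.
by rewrite /pprime ler_pdivrMr // mul1r lerDl.
Qed.

Lemma m_ge_p : p <= m. Proof. by rewrite le_max lexx. Qed.
Lemma m_ge_pp : pp <= m. Proof. by rewrite le_max lexx orbT. Qed.
Lemma m_le1 : m <= 1. Proof. by rewrite ge_max pp_le1 ltW. Qed.
Lemma m01 : forall i : E, 0 <= (fun _ => m) i <= 1.
Proof. by move=> i; rewrite m_le1 andbT (le_trans (ltW p0)) // m_ge_p. Qed.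

Lemma nu_ge0' w : 0 <= nu w. Proof. exact: nu_ge0. Qed.

Lemma updom S eta (A : {set config E}) : increasing A ->
  \sum_(w | agree S eta w && (w \in A)) nu w <=
  (\sum_(w | agree S eta w && (w \in A)) pif (fun _ => m) S w) * \sum_(w | agree S eta w) nu w.
Proof.
move=> incA; apply: (@dom_upper _ _ _ _ xpredT) => //; first exact: m01.
  exact: nu_ge0'.
move=> S' eta' _ /set0Pn[e eS]; exists e => //=.
have F := F1 ends alpha p0 p1 q0 eta' eS.
have D0 := Dsum_ge0 ends alpha p0 p1 q0 S' eta' e.
have D1 := Dsum_le ends alpha p0 p1 q0 S' eta' e.
have h1 := m_ge_p; have h2 := m_ge_pp.
move: F D0 D1.
set N1 := \sum_(w : config E | _ && w e) _.
set N := \sum_(w | agree S' eta' w) _.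
set Ds := \sum_(w | _ && dd _ _ _ _) _.
move=> F D0 D1.
have k1 : 0 <= (m - pp) * Ds by apply: mulr_ge0; rewrite ?subr_ge0.
have k2 : 0 <= (m - p) * (N - Ds) by apply: mulr_ge0; rewrite ?subr_ge0.
nra.
Qed.

Local Notation C Ehat e := (closed_cutset_event ends alpha Ehat e).

Lemma PC_ge0 Ehat e : 0 <= prod_measure (fun _ => m) (C Ehat e).
Proof. apply: sumr_ge0 => w _; apply: prodr_ge0 => i _; have := m01 i; case: (w i) => /andP[] // *; by rewrite subr_ge0. Qed.

Lemma PC_le1 Ehat e : prod_measure (fun _ => m) (C Ehat e) <= 1.
Proof.
rewrite -(pif_setT _ [ffun=> false]) -(pif_total (fun _ => m) [set: E] [ffun=> false]).
apply: sum_sub => w; apply: pif_ge0; exact: m01.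
Qed.

Lemma Cbound Ehat e S eta : ~: Ehat \subset S ->
  prod_measure (fun _ => m) (C Ehat e) * \sum_(w | agree S eta w) nu w <=
  \sum_(w | agree S eta w && (w \in C Ehat e)) nu w.
Proof.
move=> sub; have hdec : increasing (~: C Ehat e) by apply: C_dec.
have h := updom S eta hdec.
have hC : forall w w', (forall i, i \in ~: Ehat -> w i = w' i) ->
    (w \in C Ehat e) = (w' \in C Ehat e) by move=> w w' hw; apply: C_dep.
rewrite !sum_compl pif_total (@pif_C E R (fun _ => m) (~: Ehat) S eta (C Ehat e) hC sub) in h.
move: h; set P := prod_measure _ _; set N := \sum_(w | agree S eta w) _.
set M := \sum_(w : config E | _ && _) nu _.
move=> h; nra.
Qed.

Lemma Z_gt0 : 0 < fk_Z ends p q alpha.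
Proof.
rewrite /fk_Z (bigD1 [ffun=> false]) //=; apply: ltr_wpDr; last exact: nu_gt0.
by apply: sumr_ge0 => w _; apply: nu_ge0.
Qed.

Definition goodS (Ehat : {set E}) : pred {set E} :=
  fun S => (~: Ehat \subset S) || (S \subset ~: Ehat).

Lemma part1 (Ehat : {set E}) : p < pp ->
  stoch_le (prod_measure (fun e => p + (if e \in Ehat then eps_hat ends p q alpha Ehat e else 0)))
           (fk_measure ends p q alpha).
Proof.
move=> hp A incA.
have hpp := ltW hp.
set r := fun e => _.
have nrm : `|pp - p| = pp - p by rewrite ger0_norm // subr_ge0 ltW.
have hr : forall i, 0 <= r i <= 1.
  move=> i; rewrite /r /eps_hat nrm; case: ifP => _; last by rewrite addr0 !ltW.
  have h1 := PC_ge0 Ehat i; have h2 := PC_le1 Ehat i; have h3 := pp_le1.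
  move: h1 h2; set P := prod_measure _ _ => h1 h2.
  have k1 : 0 <= (pp - p) * P by apply: mulr_ge0; rewrite ?subr_ge0.
  have k2 : 0 <= (pp - p) * (1 - P) by apply: mulr_ge0; rewrite ?subr_ge0.
  clearbody P; move: k1 k2 h3 hpp; move: (pprime p q) => u k1 k2 h3 hpp; apply/andP; split; first exact: addr_ge0 (ltW p0) k1.
  have k3 : (u - p) * P <= u - p by move: k2; rewrite mulrBr mulr1 subr_ge0.
  lra.
have := @dom_lower _ _ r nu (goodS Ehat) hr (@nu_ge0' ) _ [set: E] [ffun=> false] A _ incA.
rewrite pif_setT.
have -> : \sum_(w | agree [set: E] [ffun=> false] w) nu w = fk_Z ends p q alpha.
  by apply: eq_bigl => w; rewrite agreeT.
have -> : \sum_(w | agree [set: E] [ffun=> false] w && (w \in A)) nu w =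
          \sum_(w in A) nu w by apply: eq_bigl => w; rewrite agreeT.
move=> H; rewrite /fk_measure ler_pdivlMr ?Z_gt0 //; apply: H.
- move=> S eta gS S0.
  case: (pickP (fun e => (e \in S) && (e \in Ehat))) => [e /andP[eS eE] | none].
    exists e => //.
    have sub : ~: Ehat \subset S.
      case/orP: gS => // /subsetP h; have := h e eS; by rewrite inE eE.
    apply/andP; split.
      apply/orP; left; apply/subsetP => f fE; rewrite !inE (subsetP sub _ fE) andbT.
      by apply: contraTneq fE => ->; rewrite inE eE.
    rewrite /r eE /eps_hat nrm.
    have F := F1 ends alpha p0 p1 q0 eta eS.
    have Dm : \sum_(w | agree S eta w && (w \in C Ehat e)) nu w <=
              \sum_(w | agree S eta w && dd ends alpha e w) nu w.
      by apply: sum_mono => [w|w]; [apply: nu_ge0 | apply: C_dd].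
    have Cb := Cbound e eta sub.
    move: F Dm Cb.
    set N1 := \sum_(w : config E | _ && w e) _.
    set N := \sum_(w | agree S eta w) _.
    set Ds := \sum_(w | _ && dd _ _ _ _) _.
    set Mc := \sum_(w | _ && _) _.
    set P := prod_measure _ _.
    move=> F Dm Cb.
    have k1 : 0 <= (pp - p) * (Ds - Mc) by apply: mulr_ge0; rewrite ?subr_ge0.
    have k2 : 0 <= (pp - p) * (Mc - P * N) by apply: mulr_ge0; rewrite ?subr_ge0.
    nra.
  have [e eS] := set0Pn _ S0.
  have eE : e \notin Ehat by have := none e; rewrite eS /= => ->.
  exists e => //; apply/andP; split.
    apply/orP; right; apply/subsetP => f; rewrite !inE => /andP[_ fS].
    by have := none f; rewrite fS /= => ->.
  rewrite /r (negbTE eE) addr0.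
  have F := F1 ends alpha p0 p1 q0 eta eS.
  have D0 := Dsum_ge0 ends alpha p0 p1 q0 S eta e.
  move: F D0.
  set N1 := \sum_(w : config E | _ && w e) _.
  set N := \sum_(w | agree S eta w) _.
  set Ds := \sum_(w | _ && dd _ _ _ _) _.
  move=> F D0.
  have k1 : 0 <= (pp - p) * Ds by apply: mulr_ge0; rewrite ?subr_ge0.
  nra.
- by rewrite /goodS subsetT.
Qed.

Lemma part2 (Ehat : {set E}) : pp < p ->
  stoch_le (fk_measure ends p q alpha)
     (prod_measure (fun e => p - (if e \in Ehat then eps_hat ends p q alpha Ehat e else 0))).
Proof.
move=> hp A incA.
have hpp := ltW hp.
set r := fun e => _.
have nrm : `|pp - p| = p - pp by rewrite ler0_norm ?opprB // subr_le0 ltW.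
have hr : forall i, 0 <= r i <= 1.
  move=> i; rewrite /r /eps_hat nrm; case: ifP => _; last by rewrite subr0 !ltW.
  have h1 := PC_ge0 Ehat i; have h2 := PC_le1 Ehat i; have h3 := pp_ge0.
  move: h1 h2; set P := prod_measure _ _ => h1 h2.
  have k1 : 0 <= (p - pp) * P by apply: mulr_ge0; rewrite ?subr_ge0.
  have k2 : 0 <= (p - pp) * (1 - P) by apply: mulr_ge0; rewrite ?subr_ge0.
  clearbody P; move: k1 k2 h3 hpp; move: (pprime p q) => u k1 k2 h3 hpp.
  have k3 : (p - u) * P <= p - u by move: k2; rewrite mulrBr mulr1 subr_ge0.
  apply/andP; split; last by rewrite lerBlDr ler_wpDr // ltW.
  lra.
have := @dom_upper _ _ r nu (goodS Ehat) hr (@nu_ge0' ) _ [set: E] [ffun=> false] A _ incA.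
rewrite pif_setT.
have -> : \sum_(w | agree [set: E] [ffun=> false] w) nu w = fk_Z ends p q alpha.
  by apply: eq_bigl => w; rewrite agreeT.
have -> : \sum_(w | agree [set: E] [ffun=> false] w && (w \in A)) nu w =
          \sum_(w in A) nu w by apply: eq_bigl => w; rewrite agreeT.
move=> H; rewrite /fk_measure ler_pdivrMr ?Z_gt0 //; apply: H.
- move=> S eta gS S0.
  case: (pickP (fun e => (e \in S) && (e \in Ehat))) => [e /andP[eS eE] | none].
    exists e => //.
    have sub : ~: Ehat \subset S.
      case/orP: gS => // /subsetP h; have := h e eS; by rewrite inE eE.
    apply/andP; split.
      apply/orP; left; apply/subsetP => f fE; rewrite !inE (subsetP sub _ fE) andbT.
      by apply: contraTneq fE => ->; rewrite inE eE.
    rewrite /r eE /eps_hat nrm.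
    have F := F1 ends alpha p0 p1 q0 eta eS.
    have Dm : \sum_(w | agree S eta w && (w \in C Ehat e)) nu w <=
              \sum_(w | agree S eta w && dd ends alpha e w) nu w.
      by apply: sum_mono => [w|w]; [apply: nu_ge0 | apply: C_dd].
    have Cb := Cbound e eta sub.
    move: F Dm Cb.
    set N1 := \sum_(w : config E | _ && w e) _.
    set N := \sum_(w | agree S eta w) _.
    set Ds := \sum_(w | _ && dd _ _ _ _) _.
    set Mc := \sum_(w | _ && _) _.
    set P := prod_measure _ _.
    move=> F Dm Cb.
    have k1 : 0 <= (p - pp) * (Ds - Mc) by apply: mulr_ge0; rewrite ?subr_ge0.
    have k2 : 0 <= (p - pp) * (Mc - P * N) by apply: mulr_ge0; rewrite ?subr_ge0.
    nra.
  have [e eS] := set0Pn _ S0.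
  have eE : e \notin Ehat by have := none e; rewrite eS /= => ->.
  exists e => //; apply/andP; split.
    apply/orP; right; apply/subsetP => f; rewrite !inE => /andP[_ fS].
    by have := none f; rewrite fS /= => ->.
  rewrite /r (negbTE eE) subr0.
  have F := F1 ends alpha p0 p1 q0 eta eS.
  have D0 := Dsum_ge0 ends alpha p0 p1 q0 S eta e.
  move: F D0.
  set N1 := \sum_(w : config E | _ && w e) _.
  set N := \sum_(w | agree S eta w) _.
  set Ds := \sum_(w | _ && dd _ _ _ _) _.
  move=> F D0.
  have k1 : 0 <= (p - pp) * Ds by apply: mulr_ge0; rewrite ?subr_ge0.
  nra.
- by rewrite /goodS subsetT.
Qed.

End Main.

Unset Implicit Arguments.
Unset Strict Implicit.

Theorem proposition3p1 (R : realFieldType) (V E : finType) (ends : E -> V * V)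
  (bd : {set V}) (alpha : {set {set V}}) (p q : R) (Ehat : {set E}) :
  graph_connected ends ->
  partition alpha bd ->
  0 <= p <= 1 -> 0 < q ->
  (forall e, e \in Ehat -> exists chi : {set E},
       cutset ends alpha e chi /\ chi \subset ~: Ehat) ->
  (p < pprime p q ->
     stoch_le
       (prod_measure (fun e => p + (if e \in Ehat then eps_hat ends p q alpha Ehat e else 0)))
       (fk_measure ends p q alpha)) /\
  (pprime p q < p ->
     stoch_le
       (fk_measure ends p q alpha)
       (prod_measure (fun e => p - (if e \in Ehat then eps_hat ends p q alpha Ehat e else 0)))).
Proof.
move=> _ _ /andP[pge0 ple1] q0 _.
have hne : pprime p q != p -> 0 < p /\ p < 1.
  move=> hn; split.
    rewrite lt_neqAle pge0 andbT; apply: contra hn => /eqP <-.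
    by rewrite /pprime mul0r.
  rewrite lt_neqAle ple1 andbT; apply: contra hn => /eqP ->.
  by rewrite /pprime subrr mulr0 addr0 divrr // unitfE oner_eq0.
split=> h.
  have [p0 p1] := hne (negbT (gt_eqF h)); exact: part1.
have [p0 p1] := hne (negbT (lt_eqF h)); exact: part2.
Qed.
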